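(* Let $n\ge 1$ be an integer, $\kappa\in\mathbb{R}$, $T>0$ and $0<|\phi|<1/2$ satisfy $$\coth\big((\tfrac12-\phi)T\big)=\kappa-\coth\big((\tfrac12+\phi)T\big),$$ and set $\tau=nT$. Define $$\gamma_1=\frac{\coth^2(\tau-(n-\tfrac12+\phi)T)-1}{[\kappa-\coth(\tau-(n-\tfrac12+\phi)T)]^2-1},\qquad \gamma_2=\frac{\coth^2(\tau-(n-\tfrac12-\phi)T)-1}{[\kappa-\coth(\tau-(n-\tfrac12-\phi)T)]^2-1}.$$ Then $\gamma_1\gamma_2=1$, $\beta:=\gamma_1+\gamma_2>2$, and $\widehat D_a(\lambda)=\lambda^{2n-1}(\lambda-\gamma_1)(\lambda-\gamma_2)-(1-\gamma_1)(1-\gamma_2)$ factors as $(\lambda-1)\widehat H_a(\lambda)$ with $$\widehat H_a(\lambda)=\lambda^{2n}+(1-\beta)\lambda^{2n-1}+(2-\beta)\sum_{i=0}^{2n-2}\lambda^i;$$ in particular $\widehat D_a$ has a real root strictly greater than $1$. *)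

(* Defs.v *)
From Stdlib Require Import Reals.
Open Scope R_scope.

Definition coth (x : R) : R := cosh x / sinh x.

Definition Dhat (n : nat) (g1 g2 lam : R) : R :=
  lam ^ (2 * n - 1) * (lam - g1) * (lam - g2) - (1 - g1) * (1 - g2).

Definition Hhat (n : nat) (beta lam : R) : R :=
  lam ^ (2 * n) + (1 - beta) * lam ^ (2 * n - 1)
  + (2 - beta) * sum_f_R0 (fun i => lam ^ i) (2 * n - 2).

(* Main.v *)
Require Import Defs.
From Stdlib Require Import Reals Lra Lia Psatz.
Open Scope R_scope.

Lemma ch_sh (x : R) : cosh x ^ 2 - sinh x ^ 2 = 1.
Proof.
  unfold cosh, sinh. rewrite exp_Ropp.
  assert (exp x <> 0) by (apply Rgt_not_eq, exp_pos). field; auto.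
Qed.

Lemma sinh_pos (x : R) : 0 < x -> 0 < sinh x.
Proof. intro H. rewrite <- sinh_0. now apply sinh_lt. Qed.

Lemma coth_sq (x : R) : 0 < x -> coth x ^ 2 - 1 = / sinh x ^ 2.
Proof.
  intro H. pose proof (sinh_pos x H). pose proof (ch_sh x).
  unfold coth. transitivity ((cosh x ^ 2 - sinh x ^ 2) / sinh x ^ 2); [field; lra | rewrite H1; field; lra].
Qed.

Lemma geom (lam : R) (m : nat) :
  (lam - 1) * sum_f_R0 (fun i => lam ^ i) m = lam ^ S m - 1.
Proof.
  induction m; simpl. - ring.
  - rewrite Rmult_plus_distr_l, IHm. simpl. ring.
Qed.

Lemma sum_nonneg (lam : R) (m : nat) : 0 <= lam -> 0 <= sum_f_R0 (fun i => lam ^ i) m.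
Proof.
  intro H. induction m; simpl. - lra.
  - pose proof (pow_le lam (S m) H). simpl in H0. lra.
Qed.

Lemma sum_cont (m : nat) : continuity (fun lam => sum_f_R0 (fun i => lam ^ i) m).
Proof.
  induction m; cbn [sum_f_R0].
  - apply derivable_continuous, derivable_pow.
  - apply continuity_plus; auto. apply derivable_continuous, derivable_pow.
Qed.

Lemma DH (n : nat) g1 g2 lam : (1 <= n)%nat -> g1 * g2 = 1 ->
  Dhat n g1 g2 lam = (lam - 1) * Hhat n (g1 + g2) lam.
Proof.
  intros hn hg. destruct n as [|k]; [lia|].
  unfold Dhat, Hhat.
  replace (2 * S k - 1)%nat with (S (2 * k)) by lia.
  replace (2 * S k - 2)%nat with (2 * k)%nat by lia.
  replace (2 * S k)%nat with (S (S (2 * k))) by lia.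
  pose proof (geom lam (2 * k)) as G.
  pose proof (f_equal (fun t => t * (2 - (g1 + g2))) G) as G'. simpl in G'.
  set (S := sum_f_R0 _ _) in *.
  replace ((1 - g1) * (1 - g2)) with (2 - (g1 + g2)) by nra. simpl in *.
  set (P := lam ^ (k + (k + 0))) in *. apply Rminus_diag_uniq.
  match goal with |- ?L - ?R = 0 => replace (L - R) with
    ((lam * P - 1) * (2 - (g1 + g2)) - (lam - 1) * S * (2 - (g1 + g2)) + lam * P * (g1 * g2 - 1)) by ring end.
  rewrite G', hg. ring.
Qed.

Theorem mainTheorem12 (n : nat) (kappa T phi : R)
  (hn : (1 <= n)%nat) (hT : 0 < T)
  (hphi0 : 0 < Rabs phi) (hphi1 : Rabs phi < / 2)
  (heq : coth ((/ 2 - phi) * T) = kappa - coth ((/ 2 + phi) * T)) :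
  let tau := INR n * T in
  let g1 := (coth (tau - (INR n - / 2 + phi) * T) ^ 2 - 1)
            / ((kappa - coth (tau - (INR n - / 2 + phi) * T)) ^ 2 - 1) in
  let g2 := (coth (tau - (INR n - / 2 - phi) * T) ^ 2 - 1)
            / ((kappa - coth (tau - (INR n - / 2 - phi) * T)) ^ 2 - 1) in
  let beta := g1 + g2 in
  g1 * g2 = 1 /\ beta > 2 /\
  (forall lam : R, Dhat n g1 g2 lam = (lam - 1) * Hhat n beta lam) /\
  (exists lam : R, lam > 1 /\ Dhat n g1 g2 lam = 0).
Proof.
  intros tau g1 g2 beta.
  set (a := (/ 2 - phi) * T) in *. set (b := (/ 2 + phi) * T) in *.
  assert (E1 : tau - (INR n - / 2 + phi) * T = a) by (unfold tau, a; ring).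
  assert (E2 : tau - (INR n - / 2 - phi) * T = b) by (unfold tau, b; ring).
  assert (ha : 0 < a). { unfold a. apply Rmult_lt_0_compat; auto.
    pose proof (Rle_abs phi). lra. }
  assert (hb : 0 < b). { unfold b. apply Rmult_lt_0_compat; auto.
    pose proof (Rle_abs (- phi)). rewrite Rabs_Ropp in H. lra. }
  assert (hab : a <> b). { unfold a, b. intro H.
    assert (phi = 0) by nra. subst. rewrite Rabs_R0 in hphi0. lra. }
  pose proof (sinh_pos a ha) as sa. pose proof (sinh_pos b hb) as sb.
  assert (K1 : kappa - coth a = coth b) by lra.
  assert (G1 : g1 = (sinh b / sinh a) ^ 2).
  { unfold g1. rewrite E1, K1, !coth_sq by auto. field. lra. }
  assert (G2 : g2 = / (sinh b / sinh a) ^ 2).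
  { unfold g2. rewrite E2, <- heq, !coth_sq by auto. field. lra. }
  clearbody g1 g2. subst beta.
  set (u := sinh b / sinh a) in *.
  assert (hu : 0 < u) by (unfold u; apply Rdiv_lt_0_compat; auto).
  assert (hu1 : u <> 1).
  { unfold u. intro H. apply hab.
    assert (sinh b = sinh a) by (unfold Rdiv in H; apply (Rmult_eq_reg_r (/ sinh a));
      [rewrite Rinv_r by lra; lra | apply Rinv_neq_0_compat; lra]).
    destruct (Rtotal_order a b) as [h|[h|h]]; auto;
      apply sinh_lt in h; lra. }
  assert (P : g1 * g2 = 1) by (rewrite G1, G2; field; lra).
  assert (B : g1 + g2 > 2).
  { assert (g1 + g2 - 2 = (u ^ 2 - 1) ^ 2 / u ^ 2) by (rewrite G1, G2; field; lra).
    assert (0 < (u ^ 2 - 1) ^ 2 / u ^ 2).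
    { apply Rdiv_lt_0_compat; [|nra]. assert (u ^ 2 - 1 <> 0).
      { intro h. assert ((u - 1) * (u + 1) = 0) by nra.
        apply Rmult_integral in H0. lra. }
      nra. }
    lra. }
  assert (F : forall lam, Dhat n g1 g2 lam = (lam - 1) * Hhat n (g1 + g2) lam)
    by (intro; apply DH; auto).
  split; [exact P|]. split; [exact B|]. split; [exact F|].
  set (beta := g1 + g2) in *.
  assert (H1 : Hhat n beta 1 < 0).
  { unfold Hhat. rewrite !pow1.
    pose proof (sum_nonneg 1 (2 * n - 2) ltac:(lra)). nra. }
  assert (Hb : 0 < Hhat n beta beta).
  { assert (0 < Dhat n g1 g2 beta).
    { unfold Dhat. assert (0 < beta ^ (2 * n - 1)) by (apply pow_lt; lra).
      assert (e1 : (beta - g1) * (beta - g2) = 1) by (unfold beta; nra).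
      assert (e2 : (1 - g1) * (1 - g2) = 2 - beta) by (unfold beta; nra).
      rewrite Rmult_assoc, e1, e2. lra. }
    rewrite F in H. nra. }
  assert (C : continuity (Hhat n beta)).
  { unfold Hhat. intro x.
    apply continuity_plus; [apply continuity_plus|].
    - apply derivable_continuous, derivable_pow.
    - apply continuity_scal, derivable_continuous, derivable_pow.
    - apply continuity_scal, sum_cont. }
  destruct (IVT (Hhat n beta) 1 beta C ltac:(lra) H1 Hb) as [z [[z1 z2] hz]].
  exists z. assert (z <> 1) by (intro; subst; lra).
  split; [lra|]. rewrite F. fold beta. rewrite hz. ring.
Qed.
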